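(* For all integers $n,A\ge1$ and $D\ge0$, and every sufficiently large $K>1$, there exist $K_1\le K_2\le\dots\le K_{D+1}=K$ with $K_{j+1}\sim_{n,j}K_j^{A+1}$ (comparable up to multiplicative constants independent of $K$) such that, for every normalized polynomial $P$ of degree at most $D$ in $n$ real variables with real coefficients, there exist multiindices $\alpha_D<\alpha_{D-1}<\dots<\alpha_1$ with $|\alpha_j|=D-j$ such that $$\{x:|P(x)|<1/K_{D+1}\}\cap B(0,1)\subseteq\bigcup_{j=1}^D N_{1/K_j^A}\Big(Z_{\partial^{\alpha_j}P}\cap\{|\nabla\partial^{\alpha_j}P|\ge1/K_j\}\Big).$$
   Context: A polynomial is normalized if the $\ell^1$ sum of the absolute values of its coefficients equals $1$. $Z_Q=\{x\in\mathbb{R}^n:Q(x)=0\}$. $N_\sigma(E)$ is the $\sigma$-neighborhood of $E$. For multiindices, $\alpha<\beta$ means $\alpha\le\beta$ componentwise and $\alpha\ne\beta$; $\partial^\alpha$ is the corresponding partial derivative. *)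

(* Defs.v *)
From Stdlib Require Import Reals Lra Lia List Arith.
Import ListNotations.
Open Scope R_scope.

(* Points of R^n are functions nat -> R; only coordinates 0..n-1 matter. *)

Definition lsum {T : Type} (f : T -> R) (l : list T) : R :=
  fold_right (fun a acc => f a + acc) 0 l.

(* multiindices (lists of length n) of total degree <= D, each exactly once *)
Fixpoint mis (n D : nat) : list (list nat) :=
  match n with
  | O => [nil]
  | S m => flat_map (fun k => map (cons k) (mis m (D - k))) (seq 0 (S D))
  end.

Fixpoint mono (a : list nat) (x : nat -> R) : R :=
  match a with
  | nil => 1
  | k :: a' => x O ^ k * mono a' (fun i => x (S i))
  end.

Fixpoint falling (k m : nat) : nat :=
  match m with
  | O => 1%nat
  | S m' => (k * falling (k - 1) m')%nat
  end.

(* partial derivative d^b (x^a), evaluated at x *)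
Fixpoint dmono (b a : list nat) (x : nat -> R) : R :=
  match a with
  | nil => 1
  | k :: a' => let m := nth O b O in
      INR (falling k m) * x O ^ (k - m) * dmono (tl b) a' (fun i => x (S i))
  end.

(* A polynomial of degree <= D in n variables is given by its coefficients
   c a for a in mis n D (values of c elsewhere are irrelevant). *)
Definition poly_deriv (n D : nat) (c : list nat -> R) (b : list nat) (x : nat -> R) : R :=
  lsum (fun a => c a * dmono b a x) (mis n D).

Definition poly_eval (n D : nat) (c : list nat -> R) (x : nat -> R) : R :=
  lsum (fun a => c a * mono a x) (mis n D).

Definition normalized (n D : nat) (c : list nat -> R) : Prop :=
  lsum (fun a => Rabs (c a)) (mis n D) = 1.

Definition incr_mi (n : nat) (b : list nat) (i : nat) : list nat :=
  map (fun j => (nth j b O + (if Nat.eqb j i then 1 else 0))%nat) (seq 0 n).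

Definition grad_norm (n D : nat) (c : list nat -> R) (b : list nat) (x : nat -> R) : R :=
  sqrt (lsum (fun i => (poly_deriv n D c (incr_mi n b i) x) ^ 2) (seq 0 n)).

Definition norm_n (n : nat) (x : nat -> R) : R :=
  sqrt (lsum (fun i => (x i) ^ 2) (seq 0 n)).

Definition dist_n (n : nat) (x y : nat -> R) : R :=
  norm_n n (fun i => x i - y i).

Definition mi_le (a b : list nat) : Prop := Forall2 le a b.
Definition mi_lt (a b : list nat) : Prop := mi_le a b /\ a <> b.
Definition mi_abs (a : list nat) : nat := list_sum a.

Definition in_nbhd (n D : nat) (c : list nat -> R) (b : list nat) (Kj : R) (A : nat) (x : nat -> R) : Prop :=
  exists y : nat -> R,
    poly_deriv n D c b y = 0 /\
    grad_norm n D c b y >= 1 / Kj /\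
    dist_n n x y < 1 / Kj ^ A.

(* Main.v *)
Require Import Defs.
From Stdlib Require Import Classical.
From Stdlib Require Import Reals List Arith Lra Lia.
From Coquelicot Require Import Coquelicot.
Open Scope R_scope.

Lemma deriv_cont (g g1 : R -> R) : (forall t, is_derive g t (g1 t)) -> forall t, continuity_pt g t.
Proof.
  intros H t. apply derivable_continuous_pt. exists (g1 t).
  apply is_derive_Reals. apply H.
Qed.

Lemma mvt_bound (g g1 : R -> R) (M a b : R) : (forall t, is_derive g t (g1 t)) ->
  (forall t, Rmin a b <= t <= Rmax a b -> Rabs (g1 t) <= M) ->
  Rabs (g b - g a) <= M * Rabs (b - a).
Proof.
  intros Hd Hb.
  destruct (MVT_gen g a b g1) as [c [Hc Heq]].
  - intros; apply Hd.
  - intros; apply (deriv_cont g g1 Hd).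
  - rewrite Heq, Rabs_mult. apply Rmult_le_compat_r; [apply Rabs_pos|]. apply Hb; lra.
Qed.

Lemma zero_find_pos (g g1 g2 : R -> R) (M δ μ : R) :
 (forall t, is_derive g t (g1 t)) -> (forall t, is_derive g1 t (g2 t)) ->
 (forall t, Rabs t <= 1 -> Rabs (g2 t) <= M) -> 0 < μ -> 0 <= M -> 0 < δ ->
 δ/μ <= 1 -> δ/μ * M <= μ ->
 Rabs (g 0) < δ -> 2*μ <= g1 0 ->
 exists t, Rabs t <= δ/μ /\ g t = 0 /\ μ <= Rabs (g1 t).
Proof.
  intros H1 H2 HM Hmu HM0 Hd Hh1 HhM Hg0 Hg10.
  set (h := δ/μ) in *.
  assert (Hh0 : 0 < h) by (unfold h; apply Rdiv_lt_0_compat; lra).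
  assert (Hg1 : forall t, Rabs t <= h -> μ <= g1 t).
  { intros t Ht.
    assert (Rabs (g1 t - g1 0) <= M * Rabs (t - 0)).
    { apply (mvt_bound g1 g2). exact H2. intros u Hu. apply HM.
      assert (Ht' : - h <= t <= h) by (apply Rabs_le_between; exact Ht).
      unfold Rmin, Rmax in Hu. destruct (Rle_dec 0 t); apply Rabs_le; lra. }
    rewrite Rminus_0_r in H. 
    assert (M * Rabs t <= μ).
    { apply Rle_trans with (M * h); [apply Rmult_le_compat_l; lra | rewrite Rmult_comm; lra]. }
    apply Rabs_le_between in H; lra. }
  assert (Hp : g h > 0).
  { destruct (MVT_gen g 0 h g1) as [c [Hc Heq]].
    - intros; apply H1.
    - intros; apply (deriv_cont g g1 H1).
    - unfold Rmin, Rmax in Hc; destruct (Rle_dec 0 h); [|lra].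
      assert (μ <= g1 c) by (apply Hg1; rewrite Rabs_pos_eq; lra).
      apply Rabs_def2 in Hg0.
      assert (g1 c * (h - 0) >= μ * h) by (apply Rle_ge; rewrite Rminus_0_r; apply Rmult_le_compat_r; lra).
      assert (μ * h = δ) by (unfold h; field; lra). lra. }
  assert (Hn : g (-h) < 0).
  { destruct (MVT_gen g (-h) 0 g1) as [c [Hc Heq]].
    - intros; apply H1.
    - intros; apply (deriv_cont g g1 H1).
    - unfold Rmin, Rmax in Hc; destruct (Rle_dec (-h) 0); [|lra].
      assert (μ <= g1 c) by (apply Hg1; apply Rabs_le; lra).
      apply Rabs_def2 in Hg0.
      assert (g1 c * (0 - - h) >= μ * h) by (apply Rle_ge; replace (0 - - h) with h by ring; apply Rmult_le_compat_r; lra).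
      assert (μ * h = δ) by (unfold h; field; lra). lra. }
  destruct (IVT g (-h) h (deriv_cont g g1 H1)) as [z [Hz Hgz]]; try lra.
  exists z. assert (Rabs z <= h) by (apply Rabs_le; lra).
  split; [auto|split; auto]. rewrite Rabs_pos_eq. apply Hg1; auto.
  apply Rle_trans with μ; [lra|apply Hg1; auto].
Qed.

Lemma zero_find (g g1 g2 : R -> R) (M δ μ : R) :
 (forall t, is_derive g t (g1 t)) -> (forall t, is_derive g1 t (g2 t)) ->
 (forall t, Rabs t <= 1 -> Rabs (g2 t) <= M) -> 0 < μ -> 0 <= M -> 0 < δ ->
 δ/μ <= 1 -> δ/μ * M <= μ ->
 Rabs (g 0) < δ -> 2*μ <= Rabs (g1 0) ->
 exists t, Rabs t <= δ/μ /\ g t = 0 /\ μ <= Rabs (g1 t).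
Proof.
  intros H1 H2 HM Hmu HM0 Hd Hh1 HhM Hg0 Hg10.
  destruct (Rle_dec 0 (g1 0)).
  - rewrite Rabs_pos_eq in Hg10; auto. eapply zero_find_pos; eauto.
  - destruct (zero_find_pos (fun t => - g t) (fun t => - g1 t) (fun t => - g2 t) M δ μ) as [t [A1 [A2 A3]]]; auto.
    + intros t. replace (- g1 t) with (-1 * g1 t) by ring.
      eapply is_derive_ext; [|exact (is_derive_scal g t (-1) (g1 t) (H1 t))]. intro; simpl; ring.
    + intros t. replace (- g2 t) with (-1 * g2 t) by ring.
      eapply is_derive_ext; [|exact (is_derive_scal g1 t (-1) (g2 t) (H2 t))]. intro; simpl; ring.
    + intros t Ht. rewrite Rabs_Ropp. auto.
    + rewrite Rabs_Ropp. auto.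
    + rewrite Rabs_left in Hg10; lra.
    + exists t. rewrite Rabs_Ropp in A3. repeat split; auto. lra.
Qed.
Lemma falling_S k m : falling k (S m) = (falling k m * (k - m))%nat.
Proof.
  revert k; induction m; intros k.
  - simpl. lia.
  - change (falling k (S (S m))) with (k * falling (k-1) (S m))%nat.
    rewrite IHm. simpl falling. 
    replace (k - 1 - m)%nat with (k - S m)%nat by lia. lia.
Qed.

Lemma falling_zero k m : (k < m)%nat -> falling k m = 0%nat.
Proof.
  revert k; induction m; intros k H; [lia|].
  simpl. destruct k; [lia|]. rewrite IHm; lia.
Qed.

Lemma falling_kk k : (1 <= falling k k)%nat.
Proof.
  induction k; simpl; [lia|]. rewrite Nat.sub_0_r. nia.
Qed.

Lemma falling_le k m : (falling k m <= k ^ m)%nat.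
Proof.
  revert k; induction m; intros k; simpl; [lia|].
  specialize (IHm (k-1)%nat).
  assert ((k-1)^m <= k^m)%nat by (apply Nat.pow_le_mono_l; lia). nia.
Qed.

Lemma nth_tl (b : list nat) j : nth j (tl b) 0%nat = nth (S j) b 0%nat.
Proof. destruct b; simpl; auto. destruct j; auto. Qed.

Lemma dmono_ext_x b a x y : (forall j, x j = y j) -> dmono b a x = dmono b a y.
Proof.
  revert b x y; induction a; intros b x y H; simpl; auto.
  rewrite H. f_equal. apply IHa. intros; apply H.
Qed.

Lemma dmono_ext_b b b' a x : (forall j, (j < length a)%nat -> nth j b 0%nat = nth j b' 0%nat) ->
  dmono b a x = dmono b' a x.
Proof.
  revert b b' x; induction a; intros b b' x H; simpl; auto.
  rewrite (H 0%nat) by (simpl; lia). f_equal. apply IHa. intros j Hj.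
  rewrite !nth_tl. apply H. simpl; lia.
Qed.

Lemma dmono_zero b a x : (exists j, (j < length a)%nat /\ (nth j a 0 < nth j b 0)%nat) ->
  dmono b a x = 0.
Proof.
  revert b x; induction a; intros b x [j [Hj Hlt]]; simpl in *; [lia|].
  destruct j.
  - rewrite falling_zero by lia. simpl. ring.
  - rewrite (IHa (tl b)). ring. exists j. rewrite nth_tl. split; [lia|auto].
Qed.

Lemma dmono_mono b a x : (forall j, nth j b 0%nat = 0%nat) -> dmono b a x = mono a x.
Proof.
  revert b x; induction a; intros b x H; simpl; auto.
  rewrite H. simpl. rewrite Nat.sub_0_r. rewrite IHa. ring.
  intros j. rewrite nth_tl. apply H.
Qed.

Lemma dmono_self a x : 1 <= dmono a a x.
Proof.
  revert x; induction a; intros x; simpl; [lra|].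
  rewrite Nat.sub_diag. simpl.
  assert (1 <= INR (falling a a)) by (change 1 with (INR 1); apply le_INR; apply falling_kk).
  specialize (IHa (fun i => x (S i))). nra.
Qed.

Definition RR (D : nat) := 2 * (INR D + 1).

Lemma dmono_bound D b a x : List.Forall (fun k => (k <= D)%nat) a ->
  (forall j, (j < length a)%nat -> Rabs (x j) <= 2) ->
  Rabs (dmono b a x) <= RR D ^ list_sum a.
Proof.
  revert b x; induction a; intros b x HF Hx; simpl; [rewrite Rabs_R1; lra|].
  inversion HF as [|? ? HaD HF']; subst.
  rewrite pow_add, !Rabs_mult.
  assert (HR : 0 <= RR D) by (unfold RR; pose proof (pos_INR D); lra).
  apply Rmult_le_compat; try apply Rmult_le_pos; try apply Rabs_pos.
  2: { apply IHa; auto. intros j Hj. apply Hx. simpl; lia. }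
  set (m := nth 0 b 0%nat).
  destruct (le_lt_dec m a) as [Hm|Hm].
  - assert (Hf1 : Rabs (INR (falling a m)) <= (INR D + 1) ^ a).
    { rewrite Rabs_pos_eq by apply pos_INR.
      apply Rle_trans with (INR (a ^ m)). apply le_INR, falling_le.
      rewrite pow_INR. apply Rle_trans with ((INR D + 1) ^ m).
      apply pow_incr. split; [apply pos_INR|]. apply le_INR in HaD. lra.
      apply Rle_pow. pose proof (pos_INR D); lra. auto. }
    assert (Hf2 : Rabs (x 0%nat ^ (a - m)) <= 2 ^ a).
    { rewrite <- RPow_abs. apply Rle_trans with (2 ^ (a - m)).
      apply pow_incr. split; [apply Rabs_pos|]. apply Hx; simpl; lia.
      apply Rle_pow; [lra|lia]. }
    unfold RR. rewrite Rpow_mult_distr.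
    replace (2 ^ a * (INR D + 1) ^ a) with ((INR D + 1) ^ a * 2 ^ a) by ring.
    apply Rmult_le_compat; auto; apply Rabs_pos.
  - rewrite falling_zero by lia. simpl INR. rewrite Rabs_R0, Rmult_0_l. apply pow_le; auto. Qed.

Definition xt (x : nat -> R) (i : nat) (t : R) : nat -> R :=
  fun j => if Nat.eqb j i then x j + t else x j.

Lemma dmono_deriv a : forall b b' x i, (i < length a)%nat ->
  (forall j, (j < length a)%nat -> nth j b' 0%nat = (nth j b 0 + if Nat.eqb j i then 1 else 0)%nat) ->
  forall t, is_derive (fun t => dmono b a (xt x i t)) t (dmono b' a (xt x i t)).
Proof.
  induction a as [|k a IH]; intros b b' x i Hi Hb t; simpl in Hi; [lia|].
  simpl dmono.
  assert (Htl : forall j, (j < length a)%nat -> nth j (tl b') 0%nat =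
     (nth j (tl b) 0 + if Nat.eqb (S j) i then 1 else 0)%nat).
  { intros j Hj. rewrite !nth_tl. apply Hb. simpl; lia. }
  destruct i as [|i].
  - set (m := nth 0 b 0%nat).
    assert (Hm : nth 0 b' 0%nat = S m) by (rewrite Hb by (simpl; lia); simpl; unfold m; lia).
    rewrite Hm.
    set (E := dmono (tl b) a (fun j => x (S j))).
    assert (HE : forall t, dmono (tl b') a (fun j => xt x 0 t (S j)) = E).
    { intros s. unfold E. rewrite (dmono_ext_b (tl b') (tl b)).
      apply dmono_ext_x. intros j; unfold xt; simpl; auto.
      intros j Hj. rewrite Htl by auto. simpl. lia. }
    assert (HE2 : forall t, dmono (tl b) a (fun j => xt x 0 t (S j)) = E).
    { intros s. unfold E. apply dmono_ext_x. intros j; unfold xt; simpl; auto. }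
    rewrite HE.
    apply (is_derive_ext (fun t => (INR (falling k m) * E) * (x 0%nat + t) ^ (k - m))).
    { intros s. rewrite HE2. unfold xt; simpl. ring. }
    replace (xt x 0 t 0%nat) with (x 0%nat + t) by (unfold xt; simpl; auto).
    rewrite falling_S, mult_INR.
    replace (k - S m)%nat with (pred (k - m)) by lia.
    auto_derive; auto. ring.
  - assert (Hm : nth 0 b' 0%nat = nth 0 b 0%nat) by (rewrite Hb by (simpl; lia); simpl; lia).
    rewrite Hm.
    set (x' := fun j => x (S j)).
    apply (is_derive_ext (fun t => (INR (falling k (nth 0 b 0%nat)) * x 0%nat ^ (k - nth 0 b 0%nat))
              * dmono (tl b) a (xt x' i t))).
    { intros s. reflexivity. }
    replace (dmono (tl b') a (fun j => xt x (S i) t (S j))) with (dmono (tl b') a (xt x' i t))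
      by (apply dmono_ext_x; intros j; unfold xt, x'; simpl; auto).
    replace (xt x (S i) t 0%nat) with (x 0%nat) by (unfold xt; simpl; auto).
    apply is_derive_scal. apply IH; auto. lia.
Qed.

Lemma lsum_deriv {T} (l : list T) (f g : T -> R -> R) :
  (forall a, In a l -> forall t, is_derive (f a) t (g a t)) ->
  forall t, is_derive (fun t => lsum (fun a => f a t) l) t (lsum (fun a => g a t) l).
Proof.
  induction l as [|a l IH]; intros H t; simpl.
  - apply (is_derive_const 0 t).
  - apply (is_derive_plus (f a) (fun t => lsum (fun a0 => f a0 t) l)).
    apply H; simpl; auto. apply IH. intros; apply H; simpl; auto.
Qed.

Lemma lsum_ext {T} (l : list T) f g : (forall a, In a l -> f a = g a) -> lsum f l = lsum g l.
Proof.
  induction l; intros H; simpl; auto. rewrite H, IHl; simpl; auto.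
  intros; apply H; simpl; auto.
Qed.

Lemma lsum_le {T} (l : list T) f g : (forall a, In a l -> f a <= g a) -> lsum f l <= lsum g l.
Proof.
  induction l; intros H; simpl; [lra|].
  apply Rplus_le_compat. apply H; simpl; auto. apply IHl; intros; apply H; simpl; auto.
Qed.

Lemma lsum_abs {T} (l : list T) f : Rabs (lsum f l) <= lsum (fun a => Rabs (f a)) l.
Proof.
  induction l; simpl. rewrite Rabs_R0; lra.
  eapply Rle_trans. apply Rabs_triang. lra.
Qed.

Lemma lsum_scal {T} (l : list T) f K : lsum (fun a => f a * K) l = lsum f l * K.
Proof. induction l; simpl; [ring|]. rewrite IHl. ring. Qed.

Lemma lsum_nonneg {T} (l : list T) f : (forall a, In a l -> 0 <= f a) -> 0 <= lsum f l.
Proof.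
  induction l; intros H; simpl; [lra|].
  assert (0 <= f a) by (apply H; simpl; auto).
  assert (0 <= lsum f l) by (apply IHl; intros; apply H; simpl; auto). lra.
Qed.

Lemma lsum_ge_term {T} (l : list T) f a : (forall a, In a l -> 0 <= f a) -> In a l -> f a <= lsum f l.
Proof.
  induction l as [|b l IH]; intros H Ha; simpl in *; [tauto|].
  destruct Ha as [<-|Ha].
  - assert (0 <= lsum f l) by (apply lsum_nonneg; intros; apply H; auto). lra.
  - assert (0 <= f b) by (apply H; auto). assert (f a <= lsum f l) by (apply IH; auto). lra.
Qed.

Lemma lsum_le_max {T} (l : list T) f B : (forall a, In a l -> f a <= B) -> lsum f l <= INR (length l) * B.
Proof.
  induction l; intros H; [simpl; lra|].
  change (lsum f (a :: l)) with (f a + lsum f l). cbn [length].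
  rewrite S_INR. assert (f a <= B) by (apply H; simpl; auto).
  assert (lsum f l <= INR (length l) * B) by (apply IHl; intros; apply H; simpl; auto). lra.
Qed.

Lemma mis_spec n D a : In a (mis n D) -> length a = n /\ (list_sum a <= D)%nat.
Proof.
  revert D a; induction n; intros D a H.
  - simpl in H. destruct H as [<-|[]]. simpl; lia.
  - change (mis (S n) D) with (flat_map (fun k => map (cons k) (mis n (D - k))) (seq 0 (S D))) in H.
    apply in_flat_map in H. destruct H as [k [Hk Ha]].
    apply in_map_iff in Ha. destruct Ha as [a' [<- Ha']].
    apply IHn in Ha'. apply in_seq in Hk. simpl. lia.
Qed.

Lemma mis_zero n D : In (repeat 0%nat n) (mis n D).
Proof.
  revert D; induction n; intros D; [simpl; auto|].
  change (mis (S n) D) with (flat_map (fun k => map (cons k) (mis n (D - k))) (seq 0 (S D))).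
  apply in_flat_map. exists 0%nat. split. apply in_seq; lia.
  change (repeat 0%nat (S n)) with (0%nat :: repeat 0%nat n).
  apply in_map. rewrite Nat.sub_0_r. auto.
Qed.

Lemma sum_Forall a D : (list_sum a <= D)%nat -> List.Forall (fun k => (k <= D)%nat) a.
Proof.
  induction a; simpl; intros H; constructor. lia. apply IHa; lia.
Qed.

Lemma nth_incr n b i j : (j < n)%nat ->
  nth j (incr_mi n b i) 0%nat = (nth j b 0 + if Nat.eqb j i then 1 else 0)%nat.
Proof.
  intros Hj. unfold incr_mi.
  rewrite (nth_indep _ 0%nat ((fun j => nth j b 0 + if Nat.eqb j i then 1 else 0)%nat 0%nat))
    by (rewrite length_map, length_seq; auto).
  rewrite (map_nth (fun j => nth j b 0 + if Nat.eqb j i then 1 else 0)%nat).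
  rewrite seq_nth by auto. simpl. auto.
Qed.

Lemma length_incr n b i : length (incr_mi n b i) = n.
Proof. unfold incr_mi. rewrite length_map, length_seq. auto. Qed.

Lemma poly_deriv_deriv n D c b x i : (i < n)%nat ->
  forall t, is_derive (fun t => poly_deriv n D c b (xt x i t)) t (poly_deriv n D c (incr_mi n b i) (xt x i t)).
Proof.
  intros Hi t. unfold poly_deriv.
  apply (lsum_deriv (mis n D) (fun a t => c a * dmono b a (xt x i t))
     (fun a t => c a * dmono (incr_mi n b i) a (xt x i t))).
  intros a Ha s. apply mis_spec in Ha. destruct Ha as [Hl _].
  apply is_derive_scal. apply dmono_deriv. lia.
  intros j Hj. apply nth_incr. lia.
Qed.

Lemma poly_bound n D c b y : normalized n D c ->
  (forall j, (j < n)%nat -> Rabs (y j) <= 2) ->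
  Rabs (poly_deriv n D c b y) <= RR D ^ D.
Proof.
  intros Hn Hy. unfold poly_deriv. eapply Rle_trans. apply lsum_abs.
  eapply Rle_trans. apply (lsum_le _ _ (fun a => Rabs (c a) * RR D ^ D)).
  - intros a Ha. apply mis_spec in Ha. destruct Ha as [Hl Hs].
    rewrite Rabs_mult. apply Rmult_le_compat_l. apply Rabs_pos.
    eapply Rle_trans. apply dmono_bound. apply sum_Forall; eauto.
    intros j Hj; apply Hy; lia.
    apply Rle_pow. unfold RR; pose proof (pos_INR D); lra. auto.
  - rewrite lsum_scal. unfold normalized in Hn. rewrite Hn. lra.
Qed.

Fixpoint path (n : nat) (s : nat -> nat) (k : nat) : list nat :=
  match k with O => repeat 0%nat n | S k' => incr_mi n (path n s k') (s k') end.

Lemma length_path n s k : length (path n s k) = n.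
Proof. destruct k; simpl. apply repeat_length. apply length_incr. Qed.

Lemma path_ext n s s' k : (forall k', (k' < k)%nat -> s k' = s' k') -> path n s k = path n s' k.
Proof.
  induction k; intros H; simpl; auto. rewrite IHk, H; auto.
Qed.

Lemma map_nth_seq_id (b : list nat) : map (fun j => nth j b 0%nat) (seq 0 (length b)) = b.
Proof.
  apply (nth_ext _ _ 0%nat 0%nat). rewrite length_map, length_seq; auto.
  intros j Hj. rewrite length_map, length_seq in Hj.
  rewrite (nth_indep _ 0%nat ((fun j => nth j b 0%nat) 0%nat)) by (rewrite length_map, length_seq; auto).
  rewrite (map_nth (fun j => nth j b 0%nat)). rewrite seq_nth by auto. auto.
Qed.

Lemma list_sum_map_plus (l : list nat) f g :
  list_sum (map (fun j => f j + g j)%nat l) = (list_sum (map f l) + list_sum (map g l))%nat.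
Proof. induction l; simpl; auto. rewrite IHl. lia. Qed.

Lemma list_sum_ind_seq i s len :
  list_sum (map (fun j => if Nat.eqb j i then 1 else 0)%nat (seq s len)) =
  (if andb (Nat.leb s i) (Nat.ltb i (s + len)) then 1 else 0)%nat.
Proof.
  revert s; induction len; intros s; simpl.
  - destruct (Nat.leb s i) eqn:E1; destruct (Nat.ltb i (s+0)) eqn:E2; simpl; auto.
    apply Nat.leb_le in E1; apply Nat.ltb_lt in E2; lia.
  - rewrite IHlen.
    destruct (Nat.eqb s i) eqn:E0;
    destruct (Nat.leb s i) eqn:E1; destruct (Nat.ltb i (s + S len)) eqn:E2;
    destruct (Nat.leb (S s) i) eqn:E3; destruct (Nat.ltb i (S s + len)) eqn:E4; simpl; auto;
    repeat match goal with
    | H : Nat.eqb _ _ = true |- _ => apply Nat.eqb_eq in H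
    | H : Nat.eqb _ _ = false |- _ => apply Nat.eqb_neq in H
    | H : Nat.leb _ _ = true |- _ => apply Nat.leb_le in H
    | H : Nat.leb _ _ = false |- _ => apply Nat.leb_gt in H
    | H : Nat.ltb _ _ = true |- _ => apply Nat.ltb_lt in H
    | H : Nat.ltb _ _ = false |- _ => apply Nat.ltb_ge in H
    end; lia.
Qed.

Lemma incr_sum n b i : (i < n)%nat -> length b = n ->
  list_sum (incr_mi n b i) = S (list_sum b).
Proof.
  intros Hi Hb. unfold incr_mi. rewrite list_sum_map_plus.
  rewrite list_sum_ind_seq. subst n. rewrite map_nth_seq_id.
  replace (Nat.leb 0 i && Nat.ltb i (0 + length b))%bool with true.
  lia. symmetry. apply andb_true_intro. split. apply Nat.leb_le; lia. apply Nat.ltb_lt; lia.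
Qed.

Lemma list_sum_repeat0 n : list_sum (repeat 0%nat n) = 0%nat.
Proof. induction n; simpl; auto. Qed.

Lemma path_sum n s k : (forall k, (s k < n)%nat) -> list_sum (path n s k) = k.
Proof.
  intros Hs. induction k; simpl. apply list_sum_repeat0.
  rewrite incr_sum; auto. apply length_path.
Qed.

Lemma Forall2_from_nth (l1 l2 : list nat) : length l1 = length l2 ->
  (forall j, (j < length l1)%nat -> (nth j l1 0 <= nth j l2 0)%nat) -> Forall2 le l1 l2.
Proof.
  revert l2; induction l1; intros l2 Hl H; destruct l2; simpl in *; try discriminate; constructor.
  apply (H 0%nat); lia. apply IHl1; [lia|]. intros j Hj. apply (H (S j)); lia.
Qed.

Lemma path_lt n s k : (forall k, (s k < n)%nat) -> mi_lt (path n s k) (path n s (S k)).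
Proof.
  intros Hs. split.
  - apply Forall2_from_nth. rewrite !length_path; auto.
    intros j Hj. rewrite length_path in Hj. simpl. rewrite nth_incr by auto. lia.
  - intros E. assert (list_sum (path n s k) = list_sum (path n s (S k))) by (rewrite E; auto).
    rewrite !path_sum in H; auto. lia.
Qed.

Lemma pos_sum_nth (a : list nat) : (1 <= list_sum a)%nat -> exists i, (i < length a)%nat /\ (1 <= nth i a 0)%nat.
Proof.
  induction a as [|k a IH]; simpl; intros H; [lia|].
  destruct k.
  - destruct IH as [i [H1 H2]]; [lia|]. exists (S i). simpl; split; [lia|auto].
  - exists 0%nat. simpl; lia.
Qed.

Lemma path_target n : (1 <= n)%nat -> forall m a, length a = n -> list_sum a = m ->
  exists s, (forall k, (s k < n)%nat) /\ forall j, (j < n)%nat -> nth j (path n s m) 0%nat = nth j a 0%nat.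
Proof.
  intros Hn. induction m; intros a Hl Hs.
  - exists (fun _ => 0%nat). split; [lia|]. intros j Hj. simpl.
    rewrite nth_repeat.
    assert (forall l : list nat, list_sum l = 0%nat -> forall j, nth j l 0%nat = 0%nat).
    { induction l; simpl; intros H j0; destruct j0; auto; try lia. apply IHl. lia. }
    rewrite H; auto.
  - assert (Hex : exists i, (i < n)%nat /\ (1 <= nth i a 0)%nat).
    { subst n. apply pos_sum_nth. lia. }
    destruct Hex as [i [Hi Hai]].
    set (a' := map (fun j => nth j a 0 - if Nat.eqb j i then 1 else 0)%nat (seq 0 n)).
    assert (Hl' : length a' = n) by (unfold a'; rewrite length_map, length_seq; auto).
    assert (Hnth' : forall j, (j < n)%nat -> nth j a' 0%nat = (nth j a 0 - if Nat.eqb j i then 1 else 0)%nat).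
    { intros j Hj. unfold a'.
      rewrite (nth_indep _ 0%nat ((fun j => nth j a 0 - if Nat.eqb j i then 1 else 0)%nat 0%nat))
        by (rewrite length_map, length_seq; auto).
      rewrite (map_nth (fun j => nth j a 0 - if Nat.eqb j i then 1 else 0)%nat).
      rewrite seq_nth by auto. auto. }
    assert (Ha : incr_mi n a' i = a).
    { apply (nth_ext _ _ 0%nat 0%nat). rewrite length_incr; auto.
      intros j Hj. rewrite length_incr in Hj. rewrite nth_incr, Hnth' by auto.
      destruct (Nat.eqb j i) eqn:E; [apply Nat.eqb_eq in E; subst; lia|lia]. }
    assert (Hs' : list_sum a' = m).
    { rewrite <- Ha in Hs. rewrite incr_sum in Hs; auto. }
    destruct (IHm a' Hl' Hs') as [s' [Hs1 Hs2]].
    exists (fun k => if Nat.eqb k m then i else s' k). split.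
    + intros k. destruct (Nat.eqb k m); auto.
    + intros j Hj. simpl. rewrite Nat.eqb_refl.
      rewrite (path_ext n _ s').
      rewrite <- Ha. rewrite !nth_incr by auto. rewrite Hs2; auto.
      intros k' Hk'. destruct (Nat.eqb k' m) eqn:E; auto. apply Nat.eqb_eq in E; lia.
Qed.

Lemma argmax {T} (l : list T) (f : T -> R) d : In d l ->
  exists a, In a l /\ forall b, In b l -> f b <= f a.
Proof.
  revert d; induction l as [|x l IH]; intros d Hd; [destruct Hd|].
  destruct l as [|y l'].
  - exists x. split; [simpl; auto|]. intros b [<-|[]]; lra.
  - destruct (IH y) as [a [Ha Hb]]; [simpl; auto|].
    destruct (Rle_dec (f x) (f a)).
    + exists a. split; [simpl; auto|]. intros b [<-|Hb']; auto.
    + exists x. split; [simpl; auto|]. intros b [<-|Hb']; [lra|]. specialize (Hb b Hb'). lra.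
Qed.

Lemma lsum_dominant {T} (l : list T) f a0 v e : 0 <= e ->
  (forall a, In a l -> f a = v \/ (Rabs (f a) <= e /\ a <> a0)) ->
  exists k, Rabs (lsum f l - INR k * v) <= INR (length l) * e /\ (In a0 l -> (1 <= k)%nat).
Proof.
  intros He. induction l as [|a l IH]; intros H.
  - exists 0%nat. simpl. split; [|tauto]. rewrite Rmult_0_l, Rminus_0_r, Rabs_R0. lra.
  - destruct IH as [k [Hk1 Hk2]]. intros; apply H; simpl; auto.
    change (lsum f (a :: l)) with (f a + lsum f l). cbn [length]. rewrite S_INR.
    destruct (H a) as [Hv|[Hv Hne]]; [simpl; auto| |].
    + exists (S k). split.
      * rewrite S_INR. replace (f a + lsum f l - (INR k + 1) * v) with (lsum f l - INR k * v) by (rewrite Hv; ring). lra.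
      * lia.
    + exists k. split.
      * replace (f a + lsum f l - INR k * v) with (f a + (lsum f l - INR k * v)) by ring.
        eapply Rle_trans. apply Rabs_triang. lra.
      * intros [E|E]; [congruence|auto].
Qed.

Lemma exists_smaller (a' a : list nat) : length a' = length a -> (list_sum a' <= list_sum a)%nat -> a' <> a ->
  exists j, (j < length a')%nat /\ (nth j a' 0 < nth j a 0)%nat.
Proof.
  revert a; induction a' as [|x a' IH]; intros a Hl Hs Hne; destruct a as [|y a]; simpl in *; try discriminate.
  - congruence.
  - destruct (lt_dec x y). exists 0%nat; split; [lia|auto].
    destruct (list_eq_dec Nat.eq_dec a' a) as [E|E].
    + subst. assert (x = y) by lia. congruence.
    + destruct (IH a) as [j [Hj1 Hj2]]; try lia; auto. exists (S j). split; [lia|auto].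
Qed.

Definition Nn (n D : nat) := INR (length (mis n D)).
Definition Lc (n D : nat) := 2 * Nn n D * RR D ^ D + 1.
Definition lam (n D : nat) := 1 / (2 * Nn n D * Lc n D ^ D).

Lemma RR_ge1 D : 1 <= RR D.
Proof. unfold RR. pose proof (pos_INR D). lra. Qed.

Lemma Nn_ge1 n D : 1 <= Nn n D.
Proof.
  unfold Nn. pose proof (mis_zero n D). destruct (mis n D); [destruct H|].
  cbn [length]. rewrite S_INR. pose proof (pos_INR (length l0)). lra.
Qed.

Lemma Lc_ge1 n D : 1 <= Lc n D.
Proof.
  unfold Lc. pose proof (Nn_ge1 n D). pose proof (pow_le (RR D) D). pose proof (RR_ge1 D).
  assert (0 <= RR D ^ D) by (apply pow_le; lra). nra.
Qed.

Lemma lam_pos n D : 0 < lam n D.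
Proof.
  unfold lam. pose proof (Nn_ge1 n D). pose proof (Lc_ge1 n D).
  assert (1 <= Lc n D ^ D) by (apply pow_R1_Rle; lra).
  apply Rdiv_lt_0_compat; nra.
Qed.

Lemma key_lower n D c : normalized n D c ->
  exists a, In a (mis n D) /\ forall x, (forall j, (j < n)%nat -> Rabs (x j) <= 2) ->
    lam n D <= Rabs (poly_deriv n D c a x).
Proof.
  intros Hnorm.
  set (L := Lc n D). set (F := RR D ^ D). set (N := Nn n D).
  assert (HL : 1 <= L) by apply Lc_ge1.
  assert (HN : 1 <= N) by apply Nn_ge1.
  assert (HF : 1 <= F) by (apply pow_R1_Rle; apply RR_ge1).
  destruct (argmax (mis n D) (fun a => Rabs (c a) * L ^ list_sum a) _ (mis_zero n D)) as [a [Ha Hmax]].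
  exists a. split; auto.
  destruct (mis_spec _ _ _ Ha) as [Hla Hsa].
  set (ca := Rabs (c a)).
  assert (HLD : L ^ list_sum a <= L ^ D) by (apply Rle_pow; [lra|auto]).
  assert (HLp : 0 < L ^ list_sum a) by (apply pow_lt; lra).
  assert (Hca : 1 <= N * (ca * L ^ D)).
  { unfold normalized in Hnorm. rewrite <- Hnorm. unfold N, Nn.
    apply lsum_le_max. intros b Hb. specialize (Hmax b Hb).
    assert (1 <= L ^ list_sum b) by (apply pow_R1_Rle; lra).
    assert (0 <= Rabs (c b)) by apply Rabs_pos.
    assert (0 <= ca) by apply Rabs_pos.
    assert (ca * L ^ list_sum a <= ca * L ^ D) by (apply Rmult_le_compat_l; auto).
    simpl in Hmax. fold ca in Hmax. nra. }
  intros x Hx.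
  set (v := c a * dmono a a x).
  assert (Hv : ca <= Rabs v).
  { unfold v. rewrite Rabs_mult. pose proof (dmono_self a x). rewrite (Rabs_pos_eq (dmono a a x)) by lra.
    unfold ca. pose proof (Rabs_pos (c a)). nra. }
  set (e := ca * F / L).
  assert (He : 0 <= e) by (unfold e; apply Rmult_le_pos; [apply Rmult_le_pos; [apply Rabs_pos|lra]|left; apply Rinv_0_lt_compat; lra]).
  destruct (lsum_dominant (mis n D) (fun a' => c a' * dmono a a' x) a v e He) as [k [Hk1 Hk2]].
  { intros a' Ha'. destruct (list_eq_dec Nat.eq_dec a' a) as [E|E]; [left; subst; auto|right].
    split; auto.
    destruct (mis_spec _ _ _ Ha') as [Hla' Hsa'].
    destruct (le_lt_dec (list_sum a') (list_sum a)).
    - rewrite dmono_zero. rewrite Rmult_0_r, Rabs_R0; auto.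
      apply exists_smaller; auto. congruence.
    - rewrite Rabs_mult.
      assert (Hd : Rabs (dmono a a' x) <= F).
      { eapply Rle_trans. apply dmono_bound. apply sum_Forall; eauto.
        intros j Hj; apply Hx; lia. apply Rle_pow. apply RR_ge1. auto. }
      specialize (Hmax a' Ha'). simpl in Hmax.
      assert (Hp : L ^ list_sum a * L <= L ^ list_sum a').
      { replace (L ^ list_sum a * L) with (L ^ S (list_sum a)) by (simpl; ring). apply Rle_pow; [lra|lia]. }
      assert (Hc' : Rabs (c a') * L <= ca).
      { assert (Rabs (c a') * (L ^ list_sum a * L) <= ca * L ^ list_sum a).
        { eapply Rle_trans; [|apply Hmax]. apply Rmult_le_compat_l; auto. apply Rabs_pos. }
        apply (Rmult_le_reg_r (L ^ list_sum a)); auto. nra. }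
      unfold e. apply (Rmult_le_reg_r L); [lra|]. unfold Rdiv. rewrite (Rmult_assoc (ca * F)), Rinv_l, Rmult_1_r by lra.
      pose proof (Rabs_pos (c a')). pose proof (Rabs_pos (dmono a a' x)).
      replace (Rabs (c a') * Rabs (dmono a a' x) * L) with ((Rabs (c a') * L) * Rabs (dmono a a' x)) by ring.
      apply Rmult_le_compat; auto. nra. }
  specialize (Hk2 Ha).
  assert (HkN : INR (length (mis n D)) = N) by reflexivity. rewrite HkN in Hk1.
  unfold poly_deriv.
  assert (Hkv : Rabs v <= INR k * Rabs v).
  { assert (1 <= INR k) by (change 1 with (INR 1); apply le_INR; auto). pose proof (Rabs_pos v). nra. }
  assert (HNe : N * e <= ca / 2).
  { unfold e, L, Lc. fold N F. unfold Rdiv.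
    apply (Rmult_le_reg_r (2 * N * F + 1)); [nra|].
    rewrite !Rmult_assoc, Rinv_l by nra. pose proof (Rabs_pos (c a)). fold ca in H. nra. }
  assert (Rabs (INR k * v) = INR k * Rabs v) by (rewrite Rabs_mult, Rabs_pos_eq; auto; apply pos_INR).
  pose proof (Rabs_triang_inv (INR k * v) (INR k * v - lsum (fun a' => c a' * dmono a a' x) (mis n D))).
  rewrite Rabs_minus_sym in Hk1.
  replace (INR k * v - (INR k * v - lsum (fun a' => c a' * dmono a a' x) (mis n D))) with
    (lsum (fun a' => c a' * dmono a a' x) (mis n D)) in H0 by ring.
  assert (lam n D <= ca / 2).
  { unfold lam. fold N. fold L.
    assert (1 <= L ^ D) by (apply pow_R1_Rle; lra).
    unfold Rdiv. apply (Rmult_le_reg_r (2 * N * L ^ D)); [nra|].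
    rewrite Rmult_1_l, Rmult_assoc, Rinv_l by nra. nra. }
  lra.
Qed.

Lemma sqrt_sq_abs v : sqrt (v ^ 2) = Rabs v.
Proof. rewrite <- sqrt_Rsqr_abs. f_equal. unfold Rsqr. ring. Qed.

Lemma sq_le_lsum (f : nat -> R) l i : In i l -> Rabs (f i) <= sqrt (lsum (fun j => f j ^ 2) l).
Proof.
  intros Hi. rewrite <- sqrt_sq_abs. apply sqrt_le_1_alt.
  apply (lsum_ge_term l (fun j => f j ^ 2)); auto. intros; apply pow2_ge_0.
Qed.

Lemma coord_le_norm n x j : (j < n)%nat -> Rabs (x j) <= norm_n n x.
Proof. intros Hj. unfold norm_n. apply (sq_le_lsum x). apply in_seq. lia. Qed.

Lemma grad_ge n D c b y i : (i < n)%nat ->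
  Rabs (poly_deriv n D c (incr_mi n b i) y) <= grad_norm n D c b y.
Proof.
  intros Hi. unfold grad_norm.
  apply (sq_le_lsum (fun i => poly_deriv n D c (incr_mi n b i) y)). apply in_seq; lia.
Qed.

Lemma lsum_ind_seq i v s len :
  lsum (fun j => if Nat.eqb j i then v else 0) (seq s len) =
  (if andb (Nat.leb s i) (Nat.ltb i (s + len)) then v else 0).
Proof.
  revert s; induction len; intros s; simpl.
  - destruct (Nat.leb s i) eqn:E1; destruct (Nat.ltb i (s+0)) eqn:E2; simpl; auto.
    apply Nat.leb_le in E1; apply Nat.ltb_lt in E2; lia.
  - rewrite IHlen.
    destruct (Nat.eqb s i) eqn:E0;
    destruct (Nat.leb s i) eqn:E1; destruct (Nat.ltb i (s + S len)) eqn:E2;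
    destruct (Nat.leb (S s) i) eqn:E3; destruct (Nat.ltb i (S s + len)) eqn:E4; simpl; try ring;
    repeat match goal with
    | H : Nat.eqb _ _ = true |- _ => apply Nat.eqb_eq in H
    | H : Nat.eqb _ _ = false |- _ => apply Nat.eqb_neq in H
    | H : Nat.leb _ _ = true |- _ => apply Nat.leb_le in H
    | H : Nat.leb _ _ = false |- _ => apply Nat.leb_gt in H
    | H : Nat.ltb _ _ = true |- _ => apply Nat.ltb_lt in H
    | H : Nat.ltb _ _ = false |- _ => apply Nat.ltb_ge in H
    end; lia.
Qed.

Lemma dist_xt n x i t : (i < n)%nat -> dist_n n x (xt x i t) = Rabs t.
Proof.
  intros Hi. unfold dist_n, norm_n.
  rewrite (lsum_ext _ _ (fun j => if Nat.eqb j i then t ^ 2 else 0)).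
  - rewrite lsum_ind_seq. replace (Nat.leb 0 i && Nat.ltb i (0 + n))%bool with true.
    apply sqrt_sq_abs. symmetry. apply andb_true_intro. split. apply Nat.leb_le; lia. apply Nat.ltb_lt; lia.
  - intros j _. unfold xt. destruct (Nat.eqb j i); ring.
Qed.

Lemma poly_deriv_ext_x n D c b x y : (forall j, x j = y j) -> poly_deriv n D c b x = poly_deriv n D c b y.
Proof.
  intros H. unfold poly_deriv. apply lsum_ext. intros a _. f_equal. apply dmono_ext_x; auto.
Qed.

Definition root (A : nat) (y : R) := Rpower y (/ INR (A + 1)).

Lemma INR_A1_pos A : 0 < INR (A + 1).
Proof. rewrite plus_INR. simpl. pose proof (pos_INR A). lra. Qed.

Lemma root_pos A y : 0 < root A y.
Proof. unfold root, Rpower. apply exp_pos. Qed.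

Lemma root_pow A y : 0 < y -> root A y ^ (A + 1) = y.
Proof.
  intros Hy. rewrite <- Rpower_pow by apply root_pos. unfold root.
  rewrite Rpower_mult. rewrite Rinv_l by (pose proof (INR_A1_pos A); lra).
  apply Rpower_1; auto.
Qed.

Lemma root_of_pow A z : 0 < z -> root A (z ^ (A + 1)) = z.
Proof.
  intros Hz. unfold root. rewrite <- Rpower_pow by auto. rewrite Rpower_mult.
  rewrite Rinv_r by (pose proof (INR_A1_pos A); lra). apply Rpower_1; auto.
Qed.

Lemma root_mono A y z : 0 < y <= z -> root A y <= root A z.
Proof.
  intros H. unfold root. apply Rle_Rpower_l; auto.
  left. apply Rinv_0_lt_compat. apply INR_A1_pos.
Qed.

Fixpoint Tt (C0 G : R) (A m : nat) : R :=
  match m with O => G | S m => C0 * Tt C0 G A m ^ (A + 1) end.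

Fixpoint Kd (C0 K : R) (A m : nat) : R :=
  match m with O => K | S m => root A (Kd C0 K A m / C0) end.

Lemma Tt_ge C0 G A m : 1 <= C0 -> 1 <= G -> G <= Tt C0 G A m.
Proof.
  intros HC HG. induction m; simpl; [lra|].
  assert (Tt C0 G A m <= Tt C0 G A m ^ (A + 1)).
  { pattern (Tt C0 G A m) at 1. rewrite <- pow_1. apply Rle_pow; [lra|lia]. }
  assert (0 <= Tt C0 G A m ^ (A+1)) by (apply pow_le; lra). nra.
Qed.

Lemma Kd_ge C0 G K A D : 1 <= C0 -> 1 <= G -> Tt C0 G A D <= K ->
  forall m, (m <= D)%nat -> Tt C0 G A (D - m) <= Kd C0 K A m.
Proof.
  intros HC HG HK. induction m; intros Hm.
  - rewrite Nat.sub_0_r. simpl; auto.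
  - simpl Kd. specialize (IHm ltac:(lia)).
    replace (D - m)%nat with (S (D - S m)) in IHm by lia. simpl Tt in IHm.
    set (T := Tt C0 G A (D - S m)) in *.
    assert (HT : 1 <= T) by (pose proof (Tt_ge C0 G A (D - S m) HC HG); unfold T; lra).
    rewrite <- (root_of_pow A T) at 1 by lra. apply root_mono. split.
    apply pow_lt; lra.
    apply (Rmult_le_reg_l C0); [lra|]. unfold Rdiv. rewrite <- Rmult_assoc, (Rmult_comm C0 (Kd C0 K A m)).
    rewrite Rmult_assoc, Rinv_r, Rmult_1_r by lra. auto.
Qed.

Lemma arith_cond (X C0 F : R) (A : nat) : 1 <= X -> 1 <= F -> C0 = 2 * F + 3 -> (1 <= A)%nat ->
  let Y := C0 * X ^ (A + 1) in
  (2 / Y) / (1 / X) <= 1 /\ (2 / Y) / (1 / X) * F <= 1 / X /\ (2 / Y) / (1 / X) < 1 / X ^ A.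
Proof.
  intros HX HF HC HA Y.
  assert (HP : X <= X ^ A) by (pattern X at 1; rewrite <- pow_1; apply Rle_pow; [lra|lia]).
  set (P := X ^ A) in *.
  assert (HY : Y = C0 * X * P) by (unfold Y, P; rewrite Nat.add_1_r; simpl; ring).
  assert (HC0 : 0 < C0) by lra. assert (HP0 : 0 < P) by lra.
  assert (HCP : 0 < C0 * P) by (apply Rmult_lt_0_compat; lra).
  assert (HCPX : 0 < C0 * P * X) by (apply Rmult_lt_0_compat; lra).
  assert (E : (2 / Y) / (1 / X) = 2 / (C0 * P)) by (rewrite HY; field; lra).
  rewrite E. repeat split.
  - apply (Rmult_le_reg_r (C0 * P)); [lra|]. unfold Rdiv. rewrite Rmult_assoc, Rinv_l by lra. nra.
  - unfold Rdiv. apply (Rmult_le_reg_r (C0 * P * X)); [lra|].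
    replace (2 * / (C0 * P) * F * (C0 * P * X)) with (2 * F * X) by (field; lra).
    replace (1 * / X * (C0 * P * X)) with (C0 * P) by (field; lra). nra.
  - unfold Rdiv. apply (Rmult_lt_reg_r (C0 * P)); [lra|].
    replace (2 * / (C0 * P) * (C0 * P)) with 2 by (field; lra).
    replace (1 * / P * (C0 * P)) with C0 by (field; lra). lra.
Qed.

Theorem mainTheorem7 :
  forall (n A D : nat), (1 <= n)%nat -> (1 <= A)%nat ->
  exists C : R, 1 <= C /\
  exists K0 : R, forall K : R, K > 1 -> K >= K0 ->
  exists Ks : nat -> R,
    Ks (S D) = K /\
    (forall j, (1 <= j)%nat -> (j <= D)%nat -> 0 < Ks j /\ Ks j <= Ks (S j)) /\
    (forall j, (1 <= j)%nat -> (j <= D)%nat ->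
        Ks j ^ (A + 1) / C <= Ks (S j) /\ Ks (S j) <= C * Ks j ^ (A + 1)) /\
    forall c : list nat -> R, normalized n D c ->
    exists alpha : nat -> list nat,
      (forall j, (1 <= j)%nat -> (j <= D)%nat ->
          length (alpha j) = n /\ mi_abs (alpha j) = (D - j)%nat) /\
      (forall j, (1 <= j)%nat -> (j < D)%nat -> mi_lt (alpha (S j)) (alpha j)) /\
      forall x : nat -> R,
        Rabs (poly_eval n D c x) < 1 / K -> norm_n n x < 1 ->
        exists j, (1 <= j)%nat /\ (j <= D)%nat /\
          in_nbhd n D c (alpha j) (Ks j) A x.
Proof.
  intros n A D Hn HA.
  set (F := RR D ^ D).
  assert (HF : 1 <= F) by (apply pow_R1_Rle; apply RR_ge1).
  set (C0 := 2 * F + 3).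
  assert (HC0 : 1 <= C0) by (unfold C0; lra).
  set (G := Rmax 1 (2 / lam n D)).
  assert (HG1 : 1 <= G) by apply Rmax_l.
  assert (HG2 : 2 / lam n D <= G) by apply Rmax_r.
  exists C0. split; auto.
  exists (Tt C0 G A D). intros K HK1 HK0.
  set (Ks := fun j => Kd C0 K A (S D - j)).
  exists Ks.
  assert (HKsG : forall j, (1 <= j)%nat -> (j <= S D)%nat -> G <= Ks j).
  { intros j Hj1 Hj2. unfold Ks.
    pose proof (Kd_ge C0 G K A D HC0 HG1 ltac:(lra) (S D - j) ltac:(lia)).
    pose proof (Tt_ge C0 G A (D - (S D - j)) HC0 HG1). lra. }
  assert (HKsrec : forall j, (1 <= j)%nat -> (j <= D)%nat -> Ks (S j) = C0 * Ks j ^ (A + 1)).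
  { intros j Hj1 Hj2. unfold Ks.
    replace (S D - j)%nat with (S (D - j)) by lia.
    replace (S D - S j)%nat with (D - j)%nat by lia.
    simpl Kd. rewrite root_pow. field. lra.
    pose proof (HKsG (S j) ltac:(lia) ltac:(lia)). unfold Ks in H.
    replace (S D - S j)%nat with (D - j)%nat in H by lia.
    apply Rdiv_lt_0_compat; lra. }
  split; [unfold Ks; rewrite Nat.sub_diag; reflexivity|].
  split.
  { intros j Hj1 Hj2. pose proof (HKsG j Hj1 ltac:(lia)). split; [lra|].
    rewrite HKsrec by auto.
    assert (Ks j <= Ks j ^ (A + 1)) by (pattern (Ks j) at 1; rewrite <- pow_1; apply Rle_pow; [lra|lia]).
    nra. }
  split.
  { intros j Hj1 Hj2. rewrite HKsrec by auto. pose proof (HKsG j Hj1 ltac:(lia)).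
    assert (0 <= Ks j ^ (A + 1)) by (apply pow_le; lra).
    split; [|lra]. apply (Rmult_le_reg_r C0); [lra|]. unfold Rdiv.
    rewrite Rmult_assoc, Rinv_l, Rmult_1_r by lra. assert (1 <= C0 * C0) by nra. nra. }
  intros c Hc.
  destruct (key_lower n D c Hc) as [a [Ha Hlow]].
  destruct (mis_spec _ _ _ Ha) as [Hla Hsa].
  destruct (path_target n Hn (list_sum a) a Hla eq_refl) as [s [Hs Hpath]].
  exists (fun j => path n s (D - j)).
  split.
  { intros j _ _. split. apply length_path. unfold mi_abs. apply path_sum; auto. }
  split.
  { intros j Hj1 Hj2. replace (D - j)%nat with (S (D - S j)) by lia. apply path_lt; auto. }
  intros x Hx Hnorm.
  assert (Hxb : forall j, (j < n)%nat -> Rabs (x j) <= 1).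
  { intros j Hj. pose proof (coord_le_norm n x j Hj). lra. }
  set (m := list_sum a).
  assert (Hdesc : forall k, (k <= m)%nat ->
    (exists j, (1 <= j)%nat /\ (j <= D)%nat /\ in_nbhd n D c (path n s (D - j)) (Ks j) A x) \/
    Rabs (poly_deriv n D c (path n s k) x) < 2 / Ks (S (D - k))).
  { induction k; intros Hk.
    - right. rewrite Nat.sub_0_r.
      replace (Ks (S D)) with K by (unfold Ks; rewrite Nat.sub_diag; reflexivity).
      replace (poly_deriv n D c (path n s 0) x) with (poly_eval n D c x).
      + apply Rlt_le_trans with (1 / K); auto. unfold Rdiv. apply Rmult_le_compat_r.
        left; apply Rinv_0_lt_compat; lra. lra.
      + unfold poly_deriv, poly_eval. apply lsum_ext. intros a' _. f_equal.
        symmetry. apply dmono_mono. intros j. simpl. apply nth_repeat.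
    - destruct (IHk ltac:(lia)) as [Hl|Hq]; [left; auto|].
      set (j := (D - k)%nat).
      assert (Hj1 : (1 <= j)%nat) by (unfold j, m in *; lia).
      assert (Hj2 : (j <= D)%nat) by (unfold j; lia).
      assert (HKj : G <= Ks j) by (apply HKsG; lia).
      replace (S (D - k)) with (S j) in Hq by reflexivity.
      destruct (Classical_Prop.classic (exists i, (i < n)%nat /\
          2 / Ks j <= Rabs (poly_deriv n D c (incr_mi n (path n s k) i) x))) as [[i [Hi Hge]]|Hno].
      + left. exists j. split; auto. split; auto.
        replace (D - j)%nat with k by (unfold j, m in *; lia).
        destruct (arith_cond (Ks j) C0 F A ltac:(lra) HF eq_refl HA) as [Ar1 [Ar2 Ar3]].
        rewrite <- HKsrec in Ar1, Ar2, Ar3 by auto.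
        destruct (zero_find (fun t => poly_deriv n D c (path n s k) (xt x i t))
                    (fun t => poly_deriv n D c (incr_mi n (path n s k) i) (xt x i t))
                    (fun t => poly_deriv n D c (incr_mi n (incr_mi n (path n s k) i) i) (xt x i t))
                    F (2 / Ks (S j)) (1 / Ks j)) as [t [Ht1 [Ht2 Ht3]]].
        * apply poly_deriv_deriv; auto.
        * apply poly_deriv_deriv; auto.
        * intros t Ht. apply poly_bound; auto. intros j' Hj'. unfold xt.
          specialize (Hxb j' Hj'). destruct (Nat.eqb j' i); [|lra].
          eapply Rle_trans; [apply Rabs_triang|lra].
        * apply Rdiv_lt_0_compat; lra.
        * lra.
        * assert (G <= Ks (S j)) by (apply HKsG; lia). apply Rdiv_lt_0_compat; lra.
        * auto.
        * auto.
        * rewrite (poly_deriv_ext_x _ _ _ _ _ x); auto. intros j'. unfold xt. destruct (Nat.eqb j' i); ring.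
        * rewrite (poly_deriv_ext_x _ _ _ _ _ x). lra. intros j'. unfold xt. destruct (Nat.eqb j' i); ring.
        * exists (xt x i t). split; auto. split.
          -- apply Rle_ge. eapply Rle_trans; [apply Ht3|]. apply grad_ge; auto.
          -- rewrite dist_xt by auto. lra.
      + right. replace (S (D - S k)) with j by (unfold j, m in *; lia).
        simpl path.
        apply Rnot_le_lt. intros Hc'. apply Hno. exists (s k). split; auto. }
  destruct (Hdesc m (le_n m)) as [[j [Hj1 [Hj2 Hin]]]|Hq].
  - exists j. auto.
  - exfalso.
    assert (HE : poly_deriv n D c (path n s m) x = poly_deriv n D c a x).
    { unfold poly_deriv. apply lsum_ext. intros a' Ha'. f_equal. apply dmono_ext_b.
      destruct (mis_spec _ _ _ Ha') as [Hl' _]. intros j Hj. apply Hpath. lia. }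
    rewrite HE in Hq.
    assert (Hl : lam n D <= Rabs (poly_deriv n D c a x)) by (apply Hlow; intros j Hj; specialize (Hxb j Hj); lra).
    assert (HK : G <= Ks (S (D - m))) by (apply HKsG; unfold m in *; lia).
    pose proof (lam_pos n D).
    assert (2 / Ks (S (D - m)) <= lam n D).
    { apply (Rmult_le_reg_r (Ks (S (D - m)) / lam n D)). apply Rdiv_lt_0_compat; lra.
      replace (2 / Ks (S (D - m)) * (Ks (S (D - m)) / lam n D)) with (2 / lam n D) by (field; lra).
      replace (lam n D * (Ks (S (D - m)) / lam n D)) with (Ks (S (D - m))) by (field; lra). lra. }
    lra.
Qed.
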